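(* Let $T>0$ and $0<\tau_0\leq T$. Let $\mu\colon[0,\tau_0]\to[0,+\infty[$ be a modulus of continuity, i.e. a continuous, concave, strictly increasing function with $\mu(0)=0$. Let $\nu\colon\,]0,T]\to\,]0,+\infty[$ be a non-decreasing continuous function such that for some $\kappa>0$, $$\nu(t/2)\geq\kappa\,\nu(t)\quad\text{for all } t\in\,]0,T].$$ Let $a\colon[0,T]\to\mathbb R$ be a bounded function for which there is a constant $C>0$ with $$|a(t+\tau)-a(t)|\leq \frac{C}{\nu(t)}\mu(\tau)\quad\text{whenever } 0\leq\tau\leq\tau_0,\ t,t+\tau\in\,]0,T].$$ Let $\rho\in C^\infty(\mathbb R)$ with $\operatorname{supp}\rho\subset[-1,1]$, $\rho\geq0$, $\int_{\mathbb R}\rho(s)\,ds=1$, and set $\rho_\epsilon(s)=\frac1\epsilon\rho(s/\epsilon)$. For $0<\epsilon\leq\tau_0$ define $$\tilde a_\epsilon(t)=\begin{cases}a(\epsilon)& t\leq\epsilon,\\ a(t)&\epsilon\leq t\leq T,\\ a(T)& T\leq t,\end{cases}\qquad a_\epsilon(t)=\int_{-\epsilon}^{\epsilon}\rho_\epsilon(s)\tilde a_\epsilon(t-s)\,ds,\quad t\in\mathbb R.$$ Then there exist constants $C',C''>0$, depending only on $C$, $\rho$, $\kappa$ and $\|a\|_\infty$, such that for all $0<\epsilon\leq\tau_0$ and all $t\in\,]0,T]$, $$|a_\epsilon(t)-\tilde a_\epsilon(t)|\leq C'\min\Big\{1,\frac{\mu(\epsilon)}{\nu(t)}\Big\}\quad\text{and}\quad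 |a_\epsilon'(t)|\leq \frac{C''}{\epsilon}\min\Big\{1,\frac{\mu(\epsilon)}{\nu(t)}\Big\}.$$ *)

(* Defs.v *)
From Stdlib Require Import Reals Lra.
From Coquelicot Require Import Coquelicot.
Open Scope R_scope.

Definition continuous_on_set (D : R -> Prop) (f : R -> R) : Prop :=
  forall x, D x -> filterlim f (within D (locally x)) (locally (f x)).

Definition modulus_of_continuity (tau0 : R) (mu : R -> R) : Prop :=
  (forall x, 0 <= x <= tau0 -> 0 <= mu x) /\
  continuous_on_set (fun x => 0 <= x <= tau0) mu /\
  (forall x y l, 0 <= x <= tau0 -> 0 <= y <= tau0 -> 0 <= l <= 1 ->
     l * mu x + (1 - l) * mu y <= mu (l * x + (1 - l) * y)) /\
  (forall x y, 0 <= x <= tau0 -> 0 <= y <= tau0 -> x < y -> mu x < mu y) /\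
  mu 0 = 0.

Definition smooth (f : R -> R) : Prop := forall n x, ex_derive_n f n x.

Definition rho_eps (rho : R -> R) (eps s : R) : R := / eps * rho (s / eps).

Definition atilde (a : R -> R) (T eps t : R) : R :=
  if Rle_dec t eps then a eps else if Rle_dec t T then a t else a T.

Definition a_eps (rho a : R -> R) (T eps t : R) : R :=
  RInt (fun s => rho_eps rho eps s * atilde a T eps (t - s)) (- eps) eps.

(* Main.v *)
Require Import Defs.
From Stdlib Require Import Reals Lra.
From Coquelicot Require Import Coquelicot.
Open Scope R_scope.


Lemma rho_cont (rho : R -> R) : smooth rho -> forall x, continuous rho x.
Proof. intros H x. exact (ex_derive_continuous rho x (H 1%nat x)). Qed.

Lemma rho_der (rho : R -> R) : smooth rho -> forall x, ex_derive rho x.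
Proof. intros H x. exact (H 1%nat x). Qed.

Lemma rho_dcont (rho : R -> R) : smooth rho -> forall x, continuous (Derive rho) x.
Proof. intros H x. exact (ex_derive_continuous (Derive rho) x (H 2%nat x)). Qed.

Lemma rho_d0 (rho : R -> R) : (forall s, 1 < Rabs s -> rho s = 0) ->
  forall y, 1 < Rabs y -> Derive rho y = 0.
Proof.
  intros H y Hy. rewrite (Derive_ext_loc rho (fun _ => 0)). apply Derive_const.
  assert (Hd : 0 < Rabs y - 1) by lra.
  exists (mkposreal _ Hd). intros z Hz. apply H. simpl in z.
  change (Rabs (z - y) < Rabs y - 1) in Hz.
  pose proof (Rabs_triang_inv y (y - z)) as H0. replace (y - (y - z)) with (z:R) in H0 by (simpl; ring).
  rewrite Rabs_minus_sym in Hz. lra.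
Qed.

Lemma rho_dbound (rho : R -> R) : smooth rho -> (forall s, 1 < Rabs s -> rho s = 0) ->
  exists P, 0 < P /\ forall y, Rabs (Derive rho y) <= P.
Proof.
  intros Hs H0.
  destruct (continuity_ab_maj (fun x => Rabs (Derive rho x)) (-1) 1) as [Mx [HM _]].
  lra. intros c _. apply continuity_pt_filterlim. apply continuous_Rabs_comp. apply rho_dcont; auto.
  exists (Rmax 1 (Rabs (Derive rho Mx))). split. apply Rlt_le_trans with 1. lra. apply Rmax_l.
  intros y. destruct (Rle_dec (Rabs y) 1) as [Hy|Hy].
  - apply Rle_trans with (Rabs (Derive rho Mx)). apply HM. apply Rabs_le_between; auto.
    apply Rmax_r.
  - rewrite rho_d0; auto. rewrite Rabs_R0. apply Rle_trans with 1. lra. apply Rmax_l. lra.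
Qed.


Lemma RInt_zero_ext (f : R -> R) a b : (forall x, Rmin a b < x < Rmax a b -> f x = 0) -> RInt f a b = 0.
Proof.
  intros H. rewrite (RInt_ext f (fun _ => 0)); auto. rewrite RInt_const. unfold scal; simpl; unfold mult; simpl. ring.
Qed.

Lemma exR (f : R -> R) a b : (forall z, continuous f z) -> ex_RInt f a b.
Proof. intros H. apply (ex_RInt_continuous (V:=R_CompleteNormedModule)). intros; apply H. Qed.

Lemma rho_int (rho : R -> R) : (forall x, continuous rho x) ->
  (forall s, 1 < Rabs s -> rho s = 0) ->
  is_RInt_gen rho (Rbar_locally m_infty) (Rbar_locally p_infty) 1 ->
  RInt rho (-1) 1 = 1.
Proof.
  intros Hc H0 Hg.
  assert (Hex : forall a b, ex_RInt rho a b) by (intros; apply exR; auto).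
  assert (Hab : forall a b, a < -1 -> 1 < b -> RInt rho a b = RInt rho (-1) 1).
  { intros a b Ha Hb.
    rewrite <- (RInt_Chasles rho a (-1) b); auto.
    rewrite <- (RInt_Chasles rho (-1) 1 b); auto.
    rewrite (RInt_zero_ext rho a (-1)). rewrite (RInt_zero_ext rho 1 b).
    change (0 + (RInt rho (-1) 1 + 0) = RInt rho (-1) 1). ring.
    intros x Hx. apply H0. rewrite Rmin_left in Hx by lra. rewrite Rmax_right in Hx by lra.
    rewrite Rabs_right; lra.
    intros x Hx. apply H0. rewrite Rmin_left in Hx by lra. rewrite Rmax_right in Hx by lra.
    rewrite Rabs_left; lra. }
  apply (filterlimi_locally_unique (F := filter_prod (Rbar_locally m_infty) (Rbar_locally p_infty))
          (fun ab => is_RInt rho (fst ab) (snd ab))); auto.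
  - apply filter_forall. intros ab y1 y2 H1 H2.
    rewrite <- (is_RInt_unique _ _ _ _ H1). rewrite <- (is_RInt_unique _ _ _ _ H2). reflexivity.
  - intros P HP. simpl. unfold filtermapi.
    apply (Filter_prod _ _ _ (fun x => x < -1) (fun y => 1 < y)).
    exists (-1). auto. exists 1. auto.
    intros x y Hx Hy. exists (RInt rho (-1) 1). split.
    simpl. rewrite <- (Hab x y Hx Hy). apply (RInt_correct (V:=R_CompleteNormedModule)). auto.
    apply locally_singleton. auto.
Qed.


Definition clip (T eps u : R) := Rmax eps (Rmin u T).

Lemma atilde_clip a T eps u : eps <= T -> atilde a T eps u = a (clip T eps u).
Proof.
  intros H. unfold atilde, clip. destruct (Rle_dec u eps).
  - rewrite Rmin_left by lra. rewrite Rmax_left by lra. auto.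
  - destruct (Rle_dec u T).
    + rewrite Rmin_left by lra. rewrite Rmax_right by lra. auto.
    + rewrite Rmin_right by lra. rewrite Rmax_right by lra. auto.
Qed.

Lemma clip_range T eps u : eps <= T -> eps <= clip T eps u <= T.
Proof. intros H. unfold clip, Rmax, Rmin. repeat destruct Rle_dec; lra. Qed.

Lemma clip_lip T eps u v : Rabs (clip T eps u - clip T eps v) <= Rabs (u - v).
Proof. unfold clip, Rmax, Rmin, Rabs. repeat destruct Rle_dec; repeat destruct Rcase_abs; lra. Qed.

Lemma clip_half T eps u t : 0 < t <= T -> Rabs (u - t) <= eps -> t / 2 <= Rmin (clip T eps u) (clip T eps t).
Proof. intros Ht Hu. unfold clip, Rmax, Rmin in *. unfold Rabs in Hu.
  repeat destruct Rle_dec; repeat destruct Rcase_abs; lra. Qed.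

Lemma mu_mono tau0 mu : modulus_of_continuity tau0 mu ->
  forall x y, 0 <= x <= tau0 -> 0 <= y <= tau0 -> x <= y -> mu x <= mu y.
Proof.
  intros [_ [_ [_ [Hs _]]]] x y Hx Hy Hxy. destruct (Req_dec x y) as [->|Hn]. lra.
  left. apply Hs; auto. lra.
Qed.

Lemma mu_nonneg tau0 mu : modulus_of_continuity tau0 mu ->
  forall x, 0 <= x <= tau0 -> 0 <= mu x.
Proof. intros [H _]. exact H. Qed.

Lemma mu_small tau0 mu : 0 < tau0 -> modulus_of_continuity tau0 mu ->
  forall e, 0 < e -> exists d, 0 < d /\ forall r, 0 <= r <= tau0 -> r < d -> mu r < e.
Proof.
  intros Ht [_ [Hc [_ [_ H0]]]] e He.
  specialize (Hc 0 (conj (Rle_refl 0) (Rlt_le _ _ Ht))).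
  specialize (Hc _ (locally_ball (mu 0) (mkposreal e He))).
  destruct Hc as [d Hd]. exists d. split. apply cond_pos.
  intros r Hr Hrd. specialize (Hd r). 
  assert (B : ball 0 d r).
  { change (Rabs (r - 0) < d). rewrite Rminus_0_r, Rabs_right; lra. }
  specialize (Hd B Hr). change (Rabs (mu r - mu 0) < e) in Hd. rewrite H0, Rminus_0_r in Hd.
  apply Rabs_def2 in Hd. lra.
Qed.


Lemma a_lip C T tau0 mu nu a :
 (forall tau t, 0 <= tau <= tau0 -> 0 < t <= T -> 0 < t + tau <= T ->
    Rabs (a (t + tau) - a t) <= C / nu t * mu tau) ->
 forall x y, 0 < x <= T -> 0 < y <= T -> Rabs (x - y) <= tau0 ->
   Rabs (a x - a y) <= C / nu (Rmin x y) * mu (Rabs (x - y)).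
Proof.
  intros H x y Hx Hy Hxy. destruct (Rle_dec x y) as [Hle|Hle].
  - rewrite Rmin_left by lra. rewrite Rabs_minus_sym. rewrite (Rabs_minus_sym x y).
    rewrite (Rabs_right (y - x)) by lra. rewrite Rabs_minus_sym, Rabs_right in Hxy by lra.
    specialize (H (y - x) x). replace (x + (y - x)) with y in H by ring. apply H; lra.
  - rewrite Rmin_right by lra.
    rewrite (Rabs_right (x - y)) by lra. rewrite Rabs_right in Hxy by lra.
    specialize (H (x - y) y). replace (y + (x - y)) with x in H by ring. apply H; lra.
Qed.

Lemma diff_bound C kappa M T tau0 (mu nu a : R -> R) eps t u :
  0 < C -> 0 < kappa -> 0 < tau0 -> tau0 <= T ->
  modulus_of_continuity tau0 mu ->
  (forall t, 0 < t <= T -> 0 < nu t) ->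
  (forall s t, 0 < s <= T -> 0 < t <= T -> s <= t -> nu s <= nu t) ->
  (forall t, 0 < t <= T -> nu (t / 2) >= kappa * nu t) ->
  (forall t, 0 <= t <= T -> Rabs (a t) <= M) ->
  (forall tau t, 0 <= tau <= tau0 -> 0 < t <= T -> 0 < t + tau <= T ->
       Rabs (a (t + tau) - a t) <= C / nu t * mu tau) ->
  0 < eps <= tau0 -> 0 < t <= T -> Rabs (u - t) <= eps ->
  Rabs (atilde a T eps u - atilde a T eps t) <=
    Rmax 1 (Rmax (2 * M) (C / kappa)) * Rmin 1 (mu eps / nu t).
Proof.
  intros HC Hk Ht0 Ht0T Hmu Hnu Hmon Hhalf HM Hinc Heps Ht Hut.
  rewrite !atilde_clip by lra.
  pose proof (clip_range T eps u ltac:(lra)) as Hp.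
  pose proof (clip_range T eps t ltac:(lra)) as Hq.
  pose proof (clip_half T eps u t Ht Hut) as Hm.
  pose proof (clip_lip T eps u t) as Hl.
  set (p := clip T eps u) in *. set (q := clip T eps t) in *.
  assert (Hpq : Rabs (p - q) <= tau0) by lra.
  pose proof (a_lip C T tau0 mu nu a Hinc p q ltac:(lra) ltac:(lra) Hpq) as H1.
  assert (Hmin : t / 2 <= Rmin p q <= T) by (split; [lra| unfold Rmin; destruct Rle_dec; lra]).
  assert (Hnm : kappa * nu t <= nu (Rmin p q)).
  { apply Rle_trans with (nu (t / 2)). apply Rge_le, Hhalf; auto.
    apply Hmon; lra. }
  assert (Hnt := Hnu t Ht).
  assert (Hkn : 0 < kappa * nu t) by (apply Rmult_lt_0_compat; lra).
  assert (Hmue : 0 <= mu eps) by (apply (mu_nonneg tau0); auto; lra).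
  assert (Hmupq : 0 <= mu (Rabs (p - q)) <= mu eps).
  { split. apply (mu_nonneg tau0); auto. split. apply Rabs_pos. lra.
    apply (mu_mono tau0); auto. split. apply Rabs_pos. lra. lra. lra. }
  assert (H2 : Rabs (a p - a q) <= C / kappa * (mu eps / nu t)).
  { eapply Rle_trans. apply H1.
    replace (C / kappa * (mu eps / nu t)) with (C * / (kappa * nu t) * mu eps)
      by (field; lra).
    unfold Rdiv. apply Rmult_le_compat. 
    apply Rmult_le_pos. lra. left. apply Rinv_0_lt_compat. lra. lra.
    apply Rmult_le_compat_l. lra. apply Rinv_le_contravar; lra. lra. }
  assert (H3 : Rabs (a p - a q) <= 2 * M).
  { unfold Rminus. eapply Rle_trans. apply Rabs_triang. rewrite Rabs_Ropp.
    pose proof (HM p ltac:(lra)). pose proof (HM q ltac:(lra)). lra. }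
  assert (Hr : 0 <= mu eps / nu t) by (apply Rmult_le_pos; [lra| left; apply Rinv_0_lt_compat; lra]).
  pose proof (Rmax_l 1 (Rmax (2 * M) (C / kappa))).
  pose proof (Rmax_r 1 (Rmax (2 * M) (C / kappa))).
  pose proof (Rmax_l (2 * M) (C / kappa)).
  pose proof (Rmax_r (2 * M) (C / kappa)).
  unfold Rmin. destruct Rle_dec.
  - lra.
  - eapply Rle_trans. apply H2. apply Rmult_le_compat_r; lra.
Qed.


Lemma atilde_cont C T tau0 (mu nu a : R -> R) eps :
  0 < C -> 0 < tau0 -> tau0 <= T ->
  modulus_of_continuity tau0 mu ->
  (forall t, 0 < t <= T -> 0 < nu t) ->
  (forall s t, 0 < s <= T -> 0 < t <= T -> s <= t -> nu s <= nu t) ->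
  (forall tau t, 0 <= tau <= tau0 -> 0 < t <= T -> 0 < t + tau <= T ->
       Rabs (a (t + tau) - a t) <= C / nu t * mu tau) ->
  0 < eps <= tau0 -> forall v, continuous (atilde a T eps) v.
Proof.
  intros HC Ht0 Ht0T Hmu Hnu Hmon Hinc Heps v.
  apply continuity_pt_filterlim. intros e He.
  assert (HN : 0 < nu eps) by (apply Hnu; lra).
  destruct (mu_small tau0 mu Ht0 Hmu (e * nu eps / C)) as [d [Hd Hsm]].
  { unfold Rdiv. apply Rmult_lt_0_compat. apply Rmult_lt_0_compat; lra. apply Rinv_0_lt_compat; lra. }
  exists (Rmin tau0 d). split. apply Rmin_pos; lra.
  intros w [_ Hw]. simpl in Hw |- *. unfold R_dist in Hw |- *.
  pose proof (Rmin_l tau0 d). pose proof (Rmin_r tau0 d).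
  rewrite !atilde_clip by lra.
  pose proof (clip_range T eps w ltac:(lra)) as Hp.
  pose proof (clip_range T eps v ltac:(lra)) as Hq.
  pose proof (clip_lip T eps w v) as Hl.
  set (p := clip T eps w) in *. set (q := clip T eps v) in *.
  assert (Hpq : Rabs (p - q) <= tau0) by lra.
  pose proof (a_lip C T tau0 mu nu a Hinc p q ltac:(lra) ltac:(lra) Hpq) as H1.
  assert (Hmin : eps <= Rmin p q <= T) by (unfold Rmin; destruct Rle_dec; lra).
  assert (Hnm : nu eps <= nu (Rmin p q)) by (apply Hmon; lra).
  assert (Hm1 : 0 <= mu (Rabs (p - q))) by (apply (mu_nonneg tau0); auto; split; [apply Rabs_pos|lra]).
  assert (Hm2 : mu (Rabs (p - q)) < e * nu eps / C) by (apply Hsm; [split; [apply Rabs_pos|lra]|lra]).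
  eapply Rle_lt_trans. apply H1.
  apply Rle_lt_trans with (C / nu eps * mu (Rabs (p - q))).
  apply Rmult_le_compat_r. lra. unfold Rdiv. apply Rmult_le_compat_l. lra.
  apply Rinv_le_contravar; lra.
  apply Rlt_le_trans with (C / nu eps * (e * nu eps / C)).
  apply Rmult_lt_compat_l. unfold Rdiv; apply Rmult_lt_0_compat; [lra| apply Rinv_0_lt_compat; lra]. lra.
  right. field. lra.
Qed.


Lemma cmul (f g : R -> R) x : continuous f x -> continuous g x -> continuous (fun y => f y * g y) x.
Proof. intros. apply (continuous_mult (K:=R_AbsRing) f g); auto. Qed.
Lemma ccomp (f g : R -> R) x : continuous f x -> continuous g (f x) -> continuous (fun y => g (f y)) x.
Proof. intros. exact (continuous_comp f g x H H0). Qed.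
Lemma cder (f : R -> R) x : ex_derive f x -> continuous f x.
Proof. intros. exact (ex_derive_continuous f x H). Qed.

Lemma rho_eps_cont rho eps : 0 < eps -> (forall x, ex_derive rho x) -> forall s, continuous (rho_eps rho eps) s.
Proof.
  intros He Hd s. apply cder. unfold rho_eps. auto_derive. apply Hd.
Qed.

Lemma rho_eps_int rho eps : 0 < eps -> (forall x, continuous rho x) -> RInt rho (-1) 1 = 1 ->
  RInt (rho_eps rho eps) (-eps) eps = 1.
Proof.
  intros He Hc H1.
  rewrite (RInt_ext (V:=R_CompleteNormedModule) (rho_eps rho eps) (fun y => scal (/eps) (rho (/eps * y + 0)))).
  rewrite (RInt_comp_lin (V:=R_CompleteNormedModule)).
  replace (/eps * -eps + 0) with (-1) by (field; lra).
  replace (/eps * eps + 0) with 1 by (field; lra). auto.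
  apply exR; auto.
  intros x _. unfold rho_eps, scal; simpl; unfold mult; simpl. f_equal. f_equal. unfold Rdiv. ring.
Qed.

Lemma est1 (rho f : R -> R) eps t B :
  0 < eps -> (forall x, ex_derive rho x) -> (forall s, 0 <= rho s) ->
  (forall x, continuous f x) ->
  RInt (rho_eps rho eps) (-eps) eps = 1 ->
  (forall u, Rabs (u - t) <= eps -> Rabs (f u - f t) <= B) ->
  Rabs (RInt (fun s => rho_eps rho eps s * f (t - s)) (-eps) eps - f t) <= B.
Proof.
  intros He Hd Hpos Hf Hint HB.
  assert (Hrc := rho_eps_cont rho eps He Hd).
  assert (Hc1 : forall s, continuous (fun s => rho_eps rho eps s * f (t - s)) s).
  { intros s. apply cmul. auto. apply (ccomp (fun s => t - s) f). apply cder. auto_derive. auto. auto. }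
  assert (E : RInt (fun s => rho_eps rho eps s * f (t - s)) (-eps) eps - f t =
              RInt (fun s => rho_eps rho eps s * (f (t - s) - f t)) (-eps) eps).
  { rewrite (RInt_ext (V:=R_CompleteNormedModule) (fun s => rho_eps rho eps s * (f (t - s) - f t))
      (fun s => minus (rho_eps rho eps s * f (t - s)) (scal (f t) (rho_eps rho eps s)))).
    rewrite (RInt_minus (V:=R_CompleteNormedModule)).
    rewrite (RInt_scal (V:=R_CompleteNormedModule)). rewrite Hint.
    unfold minus, plus, opp, scal; simpl; unfold mult; simpl. ring.
    apply exR; auto. apply exR; auto.
    apply (ex_RInt_scal (V:=R_NormedModule)). apply exR; auto.
    intros x _. unfold minus, plus, opp, scal; simpl; unfold mult; simpl. ring. }
  rewrite E.
  assert (Hc2 : forall s, continuous (fun s => rho_eps rho eps s * (f (t - s) - f t)) s).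
  { intros s. apply cmul. auto. apply (ccomp (fun s => t - s) (fun u => f u - f t)). apply cder. auto_derive. auto.
    apply (continuous_minus (V:=R_NormedModule) f (fun _ => f t)). auto. apply continuous_const. }
  eapply Rle_trans. apply abs_RInt_le. lra. apply exR; auto.
  apply Rle_trans with (RInt (fun s => scal B (rho_eps rho eps s)) (-eps) eps).
  apply RInt_le. lra.
  apply exR. intros s. apply continuous_Rabs_comp. auto.
  apply (ex_RInt_scal (V:=R_NormedModule)). apply exR; auto.
  intros x Hx. rewrite Rabs_mult. unfold scal; simpl; unfold mult; simpl.
  rewrite (Rabs_right (rho_eps rho eps x)). rewrite Rmult_comm. apply Rmult_le_compat_r.
  unfold rho_eps. apply Rmult_le_pos; auto. left; apply Rinv_0_lt_compat; lra.
  apply HB. replace (t - x - t) with (- x) by ring. rewrite Rabs_Ropp. apply Rabs_le_between. lra.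
  unfold rho_eps. apply Rle_ge, Rmult_le_pos; auto. left; apply Rinv_0_lt_compat; lra.
  rewrite (RInt_scal (V:=R_CompleteNormedModule)). rewrite Hint. unfold scal; simpl; unfold mult; simpl. lra.
  apply exR; auto.
Qed.


Lemma subst_lemma (rho f : R -> R) eps x :
  0 < eps -> (forall x, ex_derive rho x) -> (forall x, continuous f x) ->
  RInt (fun s => rho_eps rho eps s * f (x - s)) (-eps) eps =
  RInt (fun u => rho_eps rho eps (x - u) * f u) (x - eps) (x + eps).
Proof.
  intros He Hd Hf.
  set (g := fun u => rho_eps rho eps (x - u) * f u).
  assert (Hgc : forall u, continuous g u).
  { intros u. unfold g. apply cmul. apply (ccomp (fun u => x - u) (rho_eps rho eps)).
    apply cder; auto_derive; auto. apply rho_eps_cont; auto. auto. }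
  replace (x - eps) with (-1 * eps + x) by ring.
  replace (x + eps) with (-1 * - eps + x) by ring.
  rewrite <- (RInt_comp_lin (V:=R_CompleteNormedModule)) by (apply exR; auto).
  rewrite <- (opp_RInt_swap (V:=R_CompleteNormedModule)).
  rewrite (RInt_scal (V:=R_CompleteNormedModule)).
  rewrite (RInt_ext (V:=R_CompleteNormedModule) (fun s => rho_eps rho eps s * f (x - s)) (fun y => g (-1 * y + x))).
  unfold opp, scal; simpl; unfold mult; simpl. ring.
  intros y _. unfold g. f_equal. f_equal. ring. f_equal. ring.
  apply exR. intros z. apply (ccomp (fun y => -1 * y + x) g). apply cder; auto_derive; auto. auto.
  apply exR. intros z. apply cmul. apply rho_eps_cont; auto.
  apply (ccomp (fun y => x - y) f). apply cder; auto_derive; auto. auto.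
Qed.

Lemma window (rho f : R -> R) eps x t :
  0 < eps -> (forall x, ex_derive rho x) -> (forall s, 1 < Rabs s -> rho s = 0) ->
  (forall x, continuous f x) -> Rabs (x - t) < eps ->
  RInt (fun u => rho_eps rho eps (x - u) * f u) (x - eps) (x + eps) =
  RInt (fun u => rho_eps rho eps (x - u) * f u) (t - 2 * eps) (t + 2 * eps).
Proof.
  intros He Hd H0 Hf Hx.
  set (g := fun u => rho_eps rho eps (x - u) * f u).
  assert (Hgc : forall u, continuous g u).
  { intros u. unfold g. apply cmul. apply (ccomp (fun u => x - u) (rho_eps rho eps)).
    apply cder; auto_derive; auto. apply rho_eps_cont; auto. auto. }
  assert (Hz : forall u, eps < Rabs (x - u) -> g u = 0).
  { intros u Hu. unfold g, rho_eps. rewrite H0. ring.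
    unfold Rdiv. rewrite Rabs_mult, Rabs_inv, (Rabs_right eps) by lra.
    apply (Rmult_lt_reg_r eps). lra. rewrite Rmult_assoc, Rinv_l by lra. lra. }
  apply Rabs_def2 in Hx.
  rewrite <- (RInt_Chasles (V:=R_CompleteNormedModule) g (t - 2 * eps) (x - eps) (t + 2 * eps)) by (apply exR; auto).
  rewrite <- (RInt_Chasles (V:=R_CompleteNormedModule) g (x - eps) (x + eps) (t + 2 * eps)) by (apply exR; auto).
  rewrite (RInt_zero_ext g (t - 2 * eps) (x - eps)).
  rewrite (RInt_zero_ext g (x + eps) (t + 2 * eps)).
  set (I := RInt g (x - eps) (x + eps)). change (@eq R I (Rplus 0 (Rplus I 0))). rewrite Rplus_0_l, Rplus_0_r; reflexivity.
  - intros u Hu. rewrite Rmin_left in Hu by lra. rewrite Rmax_right in Hu by lra.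
    apply Hz. rewrite Rabs_left; lra.
  - intros u Hu. rewrite Rmin_left in Hu by lra. rewrite Rmax_right in Hu by lra.
    apply Hz. rewrite Rabs_right; lra.
Qed.


Lemma est2 (rho f : R -> R) eps t P B :
  0 < eps -> (forall x, ex_derive rho x) -> (forall x, continuous (Derive rho) x) ->
  (forall s, 1 < Rabs s -> rho s = 0) -> (forall y, 1 < Rabs y -> Derive rho y = 0) ->
  (forall y, Rabs (Derive rho y) <= P) -> (forall x, continuous f x) ->
  (forall u, Rabs (u - t) <= eps -> Rabs (f u - f t) <= B) ->
  ex_derive (fun x => RInt (fun s => rho_eps rho eps s * f (x - s)) (-eps) eps) t /\
  Rabs (Derive (fun x => RInt (fun s => rho_eps rho eps s * f (x - s)) (-eps) eps) t)
    <= 4 * P * B / eps.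
Proof.
  intros He Hd Hdc H0 Hd0 HP Hf HB.
  set (L := t - 2 * eps). set (U := t + 2 * eps).
  set (k := fun x u => / eps * (Derive rho ((x - u) * / eps) * / eps) * f u).
  assert (Hk : forall x u, is_derive (fun z => rho_eps rho eps (z - u) * f u) x (k x u)).
  { intros. unfold rho_eps, k. auto_derive. apply Hd. replace (x + - u) with (x - u) by ring. change (fun x0 : R => rho x0) with rho. ring. }
  assert (Hk2 : forall u v, Derive (fun z => rho_eps rho eps (z - v) * f v) u = k u v).
  { intros. apply is_derive_unique, Hk. }
  assert (Hkc : forall x u, continuity_2d_pt k x u).
  { intros x u. unfold k.
    apply continuity_2d_pt_mult.
    apply continuity_2d_pt_mult. apply continuity_2d_pt_const.
    apply continuity_2d_pt_mult. 2: apply continuity_2d_pt_const.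
    apply (continuity_1d_2d_pt_comp (Derive rho) (fun x v => (x - v) * / eps)).
    apply continuity_pt_filterlim. apply Hdc.
    apply continuity_2d_pt_mult. 2: apply continuity_2d_pt_const.
    apply continuity_2d_pt_minus. apply continuity_2d_pt_id1. apply continuity_2d_pt_id2.
    apply (continuity_1d_2d_pt_comp f (fun _ v => v)).
    apply continuity_pt_filterlim. apply Hf. apply continuity_2d_pt_id2. }
  assert (Hgc : forall x u, continuous (fun u => rho_eps rho eps (x - u) * f u) u).
  { intros x u. apply cmul. apply (ccomp (fun u => x - u) (rho_eps rho eps)).
    apply cder; auto_derive; auto. apply rho_eps_cont; auto. auto. }
  assert (HD : is_derive (fun x => RInt (fun u => rho_eps rho eps (x - u) * f u) L U) t
                 (RInt (fun u => k t u) L U)).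
  { rewrite (RInt_ext (V:=R_CompleteNormedModule) (fun u => k t u)
       (fun u => Derive (fun z => rho_eps rho eps (z - u) * f u) t)).
    apply (is_derive_RInt_param (fun x u => rho_eps rho eps (x - u) * f u)).
    - apply filter_forall. intros x0 u _. exists (k x0 u). apply Hk.
    - intros u _. apply continuity_2d_pt_ext with k. intros; symmetry; apply Hk2. apply Hkc.
    - apply filter_forall. intros y. apply exR. apply Hgc.
    - intros u _. symmetry. apply Hk2. }
  assert (HD2 : is_derive (fun x => RInt (fun s => rho_eps rho eps s * f (x - s)) (-eps) eps) t
                 (RInt (fun u => k t u) L U)).
  { apply is_derive_ext_loc with (fun x => RInt (fun u => rho_eps rho eps (x - u) * f u) L U).
    exists (mkposreal eps He). intros x Hx. change (Rabs (x - t) < eps) in Hx.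
    rewrite (subst_lemma rho f eps x), (window rho f eps x t); auto. apply HD. }
  split. exists (RInt (fun u => k t u) L U). exact HD2.
  assert (E : Derive (fun x => RInt (fun s => rho_eps rho eps s * f (x - s)) (-eps) eps) t
     = RInt (fun u => k t u) L U) by (apply is_derive_unique; exact HD2).
  rewrite E.
  set (k0 := fun u => / eps * (Derive rho ((t - u) * / eps) * / eps)).
  assert (Hk0c : forall u, continuous k0 u).
  { intros u. unfold k0. apply (cmul (fun _ => / eps) (fun u => Derive rho ((t - u) * / eps) * / eps)).
    apply continuous_const.
    apply (cmul (fun u => Derive rho ((t - u) * / eps)) (fun _ => / eps)).
    apply (ccomp (fun u => (t - u) * / eps) (Derive rho)). apply cder; auto_derive; auto. apply Hdc.
    apply continuous_const. }
  assert (Z : RInt k0 L U = 0).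
  { apply (is_RInt_unique (V:=R_CompleteNormedModule)).
    set (F := fun u => - / eps * rho ((t - u) * / eps)).
    replace 0 with (minus (F U) (F L)).
    apply (is_RInt_derive (V:=R_CompleteNormedModule)).
    - intros x _. unfold F, k0. auto_derive. apply Hd. change (fun x0 : R => rho x0) with rho. replace (t + - x) with (t - x) by ring. ring.
    - intros x _. apply Hk0c.
    - unfold F, minus, plus, opp; simpl. unfold U, L.
      replace ((t - (t + 2 * eps)) * / eps) with (-2) by (field; lra).
      replace ((t - (t - 2 * eps)) * / eps) with 2 by (field; lra).
      rewrite !H0. ring. rewrite Rabs_right; lra. rewrite Rabs_left; lra. }
  assert (E2 : RInt (fun u => k t u) L U = RInt (fun u => k0 u * (f u - f t)) L U).
  { rewrite (RInt_ext (V:=R_CompleteNormedModule) (fun u => k0 u * (f u - f t))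
      (fun u => minus (k t u) (scal (f t) (k0 u)))).
    rewrite (RInt_minus (V:=R_CompleteNormedModule)).
    rewrite (RInt_scal (V:=R_CompleteNormedModule)). rewrite Z.
    unfold minus, plus, opp, scal; simpl; unfold mult; simpl. change (@eq R (RInt (fun u => k t u) L U) (RInt (fun u => k t u) L U + - (f t * 0))). rewrite Rmult_0_r, Ropp_0, Rplus_0_r. reflexivity.
    apply exR; apply Hk0c.
    apply exR. intros u. exact (cmul k0 f u (Hk0c u) (Hf u)).
    apply (ex_RInt_scal (V:=R_NormedModule)). apply exR; apply Hk0c.
    intros u _. unfold minus, plus, opp, scal, k, k0; simpl; unfold mult; simpl. ring. }
  rewrite E2.
  assert (HP0 : 0 <= P) by (eapply Rle_trans; [apply Rabs_pos| apply (HP 0)]).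
  assert (HB0 : 0 <= B) by (eapply Rle_trans; [apply Rabs_pos| apply (HB t)]; rewrite Rminus_eq_0, Rabs_R0; lra).
  eapply Rle_trans. apply (abs_RInt_le_const _ _ _ (P * / eps * / eps * B)).
  unfold L, U; lra. apply exR. intros u. exact (cmul k0 (fun u => f u - f t) u (Hk0c u)
     (continuous_minus (V:=R_NormedModule) f (fun _ => f t) u (Hf u) (continuous_const _ u))).
  - intros u Hu. rewrite Rabs_mult. destruct (Rle_dec (Rabs (u - t)) eps) as [Hut|Hut].
    + apply Rmult_le_compat; try apply Rabs_pos. unfold k0.
      rewrite !Rabs_mult, Rabs_inv, Rabs_right by lra.
      replace (P * / eps * / eps) with (/ eps * (P * / eps)) by ring.
      apply Rmult_le_compat_l. left; apply Rinv_0_lt_compat; lra.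
      apply Rmult_le_compat_r. left; apply Rinv_0_lt_compat; lra. auto. auto.
    + unfold k0. rewrite Hd0. rewrite Rmult_0_l, Rmult_0_r, Rabs_R0, Rmult_0_l.
      apply Rmult_le_pos; auto. apply Rmult_le_pos. apply Rmult_le_pos. auto.
      left; apply Rinv_0_lt_compat; lra. left; apply Rinv_0_lt_compat; lra.
      rewrite Rabs_mult, Rabs_inv, (Rabs_right eps) by lra. rewrite Rabs_minus_sym.
      apply (Rmult_lt_reg_r eps). lra. rewrite Rmult_assoc, Rinv_l by lra. lra.
  - unfold L, U. right. field. lra.
Qed.


Theorem proposition1 :
  forall (C kappa M : R) (rho : R -> R),
    0 < C -> 0 < kappa ->
    smooth rho ->
    (forall s, 1 < Rabs s -> rho s = 0) ->
    (forall s, 0 <= rho s) ->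
    is_RInt_gen rho (Rbar_locally m_infty) (Rbar_locally p_infty) 1 ->
  exists C' C'' : R, 0 < C' /\ 0 < C'' /\
  forall (T tau0 : R) (mu nu a : R -> R),
    0 < T -> 0 < tau0 -> tau0 <= T ->
    modulus_of_continuity tau0 mu ->
    (forall t, 0 < t <= T -> 0 < nu t) ->
    (forall s t, 0 < s <= T -> 0 < t <= T -> s <= t -> nu s <= nu t) ->
    continuous_on_set (fun t => 0 < t <= T) nu ->
    (forall t, 0 < t <= T -> nu (t / 2) >= kappa * nu t) ->
    (forall t, 0 <= t <= T -> Rabs (a t) <= M) ->
    (forall tau t, 0 <= tau <= tau0 -> 0 < t <= T -> 0 < t + tau <= T ->
       Rabs (a (t + tau) - a t) <= C / nu t * mu tau) ->
    forall eps t, 0 < eps <= tau0 -> 0 < t <= T ->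
      Rabs (a_eps rho a T eps t - atilde a T eps t)
        <= C' * Rmin 1 (mu eps / nu t) /\
      ex_derive (a_eps rho a T eps) t /\
      Rabs (Derive (a_eps rho a T eps) t)
        <= C'' / eps * Rmin 1 (mu eps / nu t).
Proof.
  intros C kappa M rho HC Hk Hs Hsupp Hpos Hint.
  pose proof (rho_cont rho Hs) as Hrc.
  pose proof (rho_der rho Hs) as Hrd.
  pose proof (rho_dcont rho Hs) as Hrdc.
  pose proof (rho_d0 rho Hsupp) as Hrd0.
  destruct (rho_dbound rho Hs Hsupp) as [P [HP0 HP]].
  pose proof (rho_int rho Hrc Hsupp Hint) as Hr1.
  set (K := Rmax 1 (Rmax (2 * M) (C / kappa))).
  assert (HK : 0 < K) by (apply Rlt_le_trans with 1; [lra | apply Rmax_l]).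
  exists K, (4 * P * K). split. auto. split.
  apply Rmult_lt_0_compat; [apply Rmult_lt_0_compat; lra | auto].
  intros T tau0 mu nu a HT Ht0 Ht0T Hmu Hnu Hmon Hnuc Hhalf HM Hinc eps t Heps Ht.
  assert (HB : forall u, Rabs (u - t) <= eps ->
     Rabs (atilde a T eps u - atilde a T eps t) <= K * Rmin 1 (mu eps / nu t)).
  { intros u Hu. apply (diff_bound C kappa M T tau0 mu nu a eps t u); auto. }
  assert (Hfc : forall x, continuous (atilde a T eps) x).
  { apply (atilde_cont C T tau0 mu nu a eps); auto. }
  assert (He : 0 < eps) by lra.
  split.
  - unfold a_eps. apply est1; auto. apply rho_eps_int; auto.
  - destruct (est2 rho (atilde a T eps) eps t P (K * Rmin 1 (mu eps / nu t)) He Hrd Hrdc Hsupp Hrd0 HP Hfc HB)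
      as [H1 H2].
    split. exact H1.
    eapply Rle_trans. apply H2. right. field. lra.
Qed.
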